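(* A graph $G\in\mathcal{C}_{n,m}$ is Whitney-maximum if and only if it is strong.
   Context: $\mathcal{C}_{n,m}$ denotes the set of all connected simple graphs on $n$ vertices and $m$ edges. For a graph $G$ with vertex set $V$, $\kappa(G)$ is its number of connected components, $r(G)=|V|-\kappa(G)$, $c(G)=|E(G)|-|V|+\kappa(G)$. $\mathcal{S}(G)$ is the set of all spanning subgraphs of $G$. The Whitney polynomial is $W_G(x,y)=\sum_{H\in\mathcal{S}(G)}x^{r(G)-r(H)}y^{c(H)}$. A bivariate polynomial is nonnegative if all its coefficients are nonnegative real numbers. $N_i^{(k)}(G)$ is the number of spanning subgraphs of $G$ with exactly $i$ edges and at most $k$ connected components. A graph $G\in\mathcal{C}_{n,m}$ is strong if $N_i^{(k)}(G)\ge N_i^{(k)}(H)$ for all $H\in\mathcal{C}_{n,m}$, $i\in\{0,\ldots,m\}$, $k\in\{1,\ldots,n\}$. $G\in\mathcal{C}_{n,m}$ is Whitney-maximum if for every $H\in\mathcal{C}_{n,m}$ there is a nonnegative polynomial $Q_H$ with $W_G(x,y)-W_H(x,y)=(1-xy)Q_H(x,y)$. *)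

(* Defs.v *)
From HB Require Import structures.
From mathcomp Require Import all_boot all_order all_algebra.
Set Implicit Arguments. Unset Strict Implicit. Unset Printing Implicit Defensive.
Import Order.TTheory GRing.Theory Num.Theory.

Definition edgeset (n : nat) := {set {set 'I_n}}.

Definition simple_graph n (E : edgeset n) : bool :=
  [forall e in E, #|e| == 2].

Definition adj n (F : edgeset n) : rel 'I_n := fun x y => [set x; y] \in F.

Definition kappa n (F : edgeset n) : nat :=
  #| [set [set y | connect (adj F) x y] | x : 'I_n] |.

Definition rk n (F : edgeset n) : nat := n - kappa F.
Definition crk n (F : edgeset n) : nat := (#|F| + kappa F) - n.

Definition Cnm (n m : nat) (E : edgeset n) : bool :=
  [&& simple_graph E, #|E| == m & kappa E == 1].

Local Open Scope ring_scope.

(* Bivariate polynomials: {poly {poly R}}, x is the outer variable 'X,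
   y is the inner variable ('X)%:P. *)
Definition varx (R : nzRingType) : {poly {poly R}} := 'X.
Definition vary (R : nzRingType) : {poly {poly R}} := ('X)%:P.

Definition whitney (R : nzRingType) n (E : edgeset n) : {poly {poly R}} :=
  \sum_(F : edgeset n | F \subset E)
     varx R ^+ (rk E - rk F)%N * vary R ^+ crk F.

Definition nonneg_poly2 (R : realFieldType) (Q : {poly {poly R}}) : Prop :=
  forall i j : nat, 0 <= (Q`_i)`_j.

Definition whitney_maximum (R : realFieldType) n m (G : edgeset n) : Prop :=
  Cnm m G /\
  forall H : edgeset n, Cnm m H ->
    exists Q : {poly {poly R}}, nonneg_poly2 Q /\
      whitney R G - whitney R H = (1 - varx R * vary R) * Q.

Local Close Scope ring_scope.

Definition Nik n (E : edgeset n) (i k : nat) : nat :=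
  #| [set F : edgeset n | [&& F \subset E, #|F| == i & kappa F <= k]] |.

Definition strong n m (G : edgeset n) : Prop :=
  Cnm m G /\
  forall H : edgeset n, Cnm m H ->
    forall i k : nat, i <= m -> 1 <= k <= n -> Nik H i k <= Nik G i k.

(* Main.v *)
Require Import Defs.
From HB Require Import structures.
From mathcomp Require Import all_boot all_order all_algebra.
From mathcomp Require Import zify ring lra.
Set Implicit Arguments. Unset Strict Implicit. Unset Printing Implicit Defensive.
Import Order.TTheory GRing.Theory Num.Theory.

Definition cls n (F : edgeset n) (z : 'I_n) : {set 'I_n} :=
  [set w | connect (adj F) z w].

Lemma kappaE n (F : edgeset n) : kappa F = #|[set cls F z | z : 'I_n]|.
Proof. by []. Qed.

Lemma adj_sym n (F : edgeset n) : symmetric (adj F).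
Proof. by move=> x y; rewrite /adj setUC. Qed.

Lemma connect_symF n (F : edgeset n) x y :
  connect (adj F) x y = connect (adj F) y x.
Proof. exact: (sym_connect_sym (@adj_sym n F)). Qed.

Lemma cls_eq n (F : edgeset n) x y : connect (adj F) x y -> cls F x = cls F y.
Proof.
move=> cxy; apply/setP => w; rewrite !inE; apply/idP/idP => h.
- by apply: connect_trans h; rewrite connect_symF.
- exact: connect_trans cxy h.
Qed.

Lemma kappa_le n (F : edgeset n) : kappa F <= n.
Proof. by rewrite kappaE (leq_trans (leq_imset_card _ _)) // card_ord. Qed.

Lemma kappa_gt0 n (F : edgeset n) : 0 < n -> 0 < kappa F.
Proof.
case: n F => // n F _; rewrite kappaE; apply/card_gt0P; exists (cls F ord0).
exact: imset_f.
Qed.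

Lemma connect_split n (F : edgeset n) x y u v :
  connect (adj F) u v ->
  connect (adj (F :\ [set x; y])) u v \/
  ((connect (adj (F :\ [set x; y])) u x || connect (adj (F :\ [set x; y])) u y) &&
   (connect (adj (F :\ [set x; y])) v x || connect (adj (F :\ [set x; y])) v y)).
Proof.
set F' := F :\ [set x; y].
move=> /connectP [p pth ->] {v}.
elim: p u pth => [|w p IH] u /=; first by left.
case/andP=> huw /IH {IH} IH.
have [h|e] : adj F' u w \/ [set u; w] = [set x; y].
  move: huw; rewrite /adj /F' in_setD1 => ->; rewrite andbT.
  by case: eqP; [right | left].
- case: IH => [c|/andP [c1 c2]]; [left | right].
  + exact: connect_trans (connect1 h) c.
  + rewrite c2 andbT; case/orP: c1 => c1.
    * by rewrite (connect_trans (connect1 h) c1).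
    * by rewrite (connect_trans (connect1 h) c1) orbT.
- have hu : u \in [set x; y] by rewrite -e set21.
  have hw : w \in [set x; y] by rewrite -e set22.
  right; apply/andP; split.
  + by move: hu; rewrite !inE => /orP [] /eqP ->; rewrite connect0 ?orbT.
  + case: IH => [c|/andP [_ c2] //].
    by move: hw; rewrite !inE => /orP [] /eqP hw; subst w;
      rewrite !(connect_symF _ (last _ _)) c ?orbT.
Qed.

Lemma kappa_del n (F : edgeset n) x y : kappa (F :\ [set x; y]) <= (kappa F).+1.
Proof.
set F' := F :\ [set x; y].
have mono a b : connect (adj F') a b -> connect (adj F) a b.
  apply: connect_sub => c d; rewrite /adj /F' in_setD1 => /andP [_ h].
  exact: connect1.
pose g (C : {set 'I_n}) := [set w | [exists z in C, connect (adj F) z w]].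
have gE z : g (cls F' z) = cls F z.
  apply/setP => w; rewrite !inE; apply/existsP/idP.
  - case=> z' /andP []; rewrite inE => /mono; exact: connect_trans.
  - by move=> h; exists z; rewrite inE connect0.
set S := [set cls F' z | z : 'I_n] :\ cls F' x.
have inj : {in S &, injective g}.
  move=> C1 C2; rewrite !inE => /andP [n1 /imsetP [z1 _ E1]] /andP [n2 /imsetP [z2 _ E2]]; subst C1 C2.
  rewrite !gE => e.
  have : connect (adj F) z1 z2.
    have : z2 \in cls F z2 by rewrite inE connect0.
    by rewrite -e inE.
  case/(connect_split x y) => [c|/andP [c1 c2]]; first exact: cls_eq.
  case/orP: c1 => c1; first by rewrite (cls_eq c1) eqxx in n1.
  case/orP: c2 => c2; first by rewrite (cls_eq c2) eqxx in n2.
  by rewrite (cls_eq c1) (cls_eq c2).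
have h1 : #|S| <= kappa F.
  rewrite -(card_in_imset inj) kappaE; apply: subset_leq_card.
  apply/subsetP => C /imsetP [D]; rewrite inE => /andP [_ /imsetP [z _ ->]] ->.
  by rewrite gE imset_f.
rewrite kappaE (cardsD1 (cls F' x)) -/S.
by case: (_ \in _) => /=; rewrite ?add0n ?ltnS // ltnW.
Qed.

Lemma simple_sub n (E F : edgeset n) :
  simple_graph E -> F \subset E -> simple_graph F.
Proof.
move=> /forall_inP sE /subsetP sFE; apply/forall_inP => e eF.
exact/sE/sFE.
Qed.

Lemma kappa0 n : kappa (set0 : edgeset n) = n.
Proof.
have clsE z : cls (set0 : edgeset n) z = [set z].
  apply/setP => w; rewrite !inE; apply/idP/idP.
  - by case/connectP => [[|a p]] /=; [move=> _ -> | rewrite /adj inE].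
  - by move/eqP <-; rewrite connect0.
rewrite kappaE (eq_imset _ clsE) card_imset ?card_ord //; exact: set1_inj.
Qed.

Lemma kappa_lb n (F : edgeset n) : simple_graph F -> n <= #|F| + kappa F.
Proof.
move=> sF; move Hk: #|F| => k; elim: k F sF Hk => [|k IH] F sF Hk.
  by move/cards0_eq: Hk => ->; rewrite kappa0.
have /card_gt0P [e eF] : 0 < #|F| by rewrite Hk.
have /cards2P [x [y [_ exy]]] : #|e| == 2 by move/forall_inP: sF; apply.
subst e.
have sF' : simple_graph (F :\ [set x; y]) by apply: simple_sub sF (subsetDl _ _).
have cF : #|F| = #|F :\ [set x; y]|.+1 by rewrite (cardsD1 [set x; y] F) eF.
have := IH _ sF'; have := kappa_del F x y; lia.
Qed.

Definition AA n (E : edgeset n) (i k : nat) : nat :=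
  #| [set F : edgeset n | [&& F \subset E, #|F| == i & kappa F == k]] |.

Lemma Nik_split n (E : edgeset n) i k : Nik E i k.+1 = Nik E i k + AA E i k.+1.
Proof.
rewrite /Nik /AA -(cardsID [set F : edgeset n | [&& F \subset E, #|F| == i & kappa F <= k]]
  [set F : edgeset n | [&& F \subset E, #|F| == i & kappa F <= k.+1]]).
congr (_ + _); apply: eq_card => F; rewrite !inE;
  case: (F \subset E); case: (#|F| == i) => //=; apply/idP/idP; lia.
Qed.

Lemma Nik0 n (E : edgeset n) i : 0 < n -> Nik E i 0 = 0.
Proof.
move=> n0; apply/eqP; rewrite cards_eq0; apply/eqP/setP => F; rewrite !inE.
by rewrite leqn0 eqn0Ngt kappa_gt0 // !andbF.
Qed.

Lemma Nik_low n (E : edgeset n) i k : simple_graph E -> i + k < n -> Nik E i k = 0.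
Proof.
move=> sE lt; apply/eqP; rewrite cards_eq0; apply/eqP/setP => F; rewrite !inE.
apply/negbTE/negP => /and3P [sub /eqP fi kk].
have := kappa_lb (simple_sub sE sub); lia.
Qed.

Lemma Nik_big n (E : edgeset n) i k : #|E| < i -> Nik E i k = 0.
Proof.
move=> lt; apply/eqP; rewrite cards_eq0; apply/eqP/setP => F; rewrite !inE.
apply/negbTE/negP => /and3P [sub /eqP fi kk].
have := subset_leq_card sub; lia.
Qed.

Lemma Nik_n n (E : edgeset n) i : Nik E i n = 'C(#|E|, i).
Proof.
rewrite -cards_draws /Nik; apply: eq_card => F; rewrite !inE.
by rewrite kappa_le !andbT.
Qed.

Local Open Scope ring_scope.

Lemma coef_1mXY (R : realFieldType) (Q : {poly {poly R}}) p q :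
  (((1 - varx R * vary R) * Q)`_p)`_q =
  (Q`_p)`_q - (if p is p'.+1 then (if q is q'.+1 then (Q`_p')`_q' else 0) else 0).
Proof.
rewrite mulrBl mul1r -mulrA coefB /varx /vary coefXM coefB.
case: p => [|p] /=; first by rewrite coef0 subr0.
rewrite coefCM coefXM; case: q => [|q] //=.
Qed.

Lemma sum_ind (R : realFieldType) (T : finType) (P Q : pred T) :
  \sum_(F | P F) ((Q F)%:R : R) = (#|[set F | P F && Q F]|)%:R.
Proof.
rewrite -sum1_card natr_sum (eq_bigl (fun F => P F && Q F)) => [|F]; last by rewrite inE.
rewrite big_mkcondr; apply: eq_bigr => F _; by case: (Q F).
Qed.

Lemma coef_monom (R : realFieldType) a b p q :
  (((varx R ^+ a * vary R ^+ b))`_p)`_q = ((p == a) && (q == b))%:R :> R.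
Proof.
rewrite /varx /vary -rmorphXn mulrC coefCM coefXn.
by case: (p == a); rewrite ?mulr1 ?mulr0 ?coef0 //= coefXn.
Qed.

Lemma arithW (f k p q n : nat) : (0 < k)%N -> (k <= n)%N -> (n <= f + k)%N -> (p < n)%N ->
  ((p == (n - 1 - (n - k))%N) && (q == (f + k - n)%N)) =
  ((f == (q + n - p.+1)%N) && (k == p.+1)).
Proof.
move=> h1 h2 h3 hp; apply/idP/idP => /andP [/eqP e1 /eqP e2]; apply/andP; split; apply/eqP; lia.
Qed.

Lemma coefW (R : realFieldType) n m (E : edgeset n) p q : Cnm m E ->
  ((whitney R E)`_p)`_q = if (p < n)%N then (AA E (q + n - p.+1)%N p.+1)%:R else 0.
Proof.
case/and3P => sE /eqP mE /eqP kE.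
have n0 : (0 < n)%N by have := kappa_le E; rewrite kE.
rewrite /whitney coef_sum coef_sum.
under eq_bigr do rewrite coef_monom.
rewrite sum_ind; case: ifP => hp.
- congr (_%:R); apply: eq_card => F; rewrite !inE; case sub: (F \subset E) => //=.
  have := kappa_lb (simple_sub sE sub); have := kappa_le F; have := kappa_gt0 F n0.
  rewrite /rk /crk kE => h1 h2 h3; exact: arithW.
- rewrite -[0 : R]/(0%N%:R); congr (_%:R); apply/eqP; rewrite cards_eq0; apply/eqP/setP => F; rewrite !inE.
  apply/negbTE/negP => /andP [sub /andP [e1 _]].
  have := kappa_le F; have := kappa_gt0 F n0; move: e1 hp; rewrite /rk kE; lia.
Qed.

Definition QQ (R : realFieldType) n m (E : edgeset n) : {poly {poly R}} :=
  \poly_(p < n) \poly_(q < m.+1) (Nik E (q + n - p.+1)%N p.+1)%:R.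

Lemma coefQQ (R : realFieldType) n m (E : edgeset n) p q : Cnm m E ->
  ((QQ R m E)`_p)`_q = if (p < n)%N then (Nik E (q + n - p.+1)%N p.+1)%:R else 0.
Proof.
case/and3P => _ /eqP mE _.
rewrite coef_poly; case: ifP => hp; last by rewrite coef0.
rewrite coef_poly; case: ifP => // /negbT; rewrite -leqNgt => hq.
by rewrite Nik_big // mE; lia.
Qed.

Lemma key (R : realFieldType) n m (E : edgeset n) p q : Cnm m E ->
  (((1 - varx R * vary R) * QQ R m E - whitney R E)`_p)`_q =
  if (p == n)%N then (if q is q'.+1 then - ('C(m, q'))%:R else 0) else 0.
Proof.
move=> cE; have [sE /eqP mE /eqP kE] := and3P cE.
have n0 : (0 < n)%N by have := kappa_le E; rewrite kE.
rewrite coefB coefB coef_1mXY !(@coefQQ R n m E) // (@coefW R n m E) //.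
case: (ltngtP p n) => hp.
- case: p hp => [|p] hp /=.
  + by rewrite subr0 Nik_split natrD Nik0 // add0r subrr.
  + case: q => [|q] /=.
    * rewrite subr0 Nik_split natrD (@Nik_low n E) ?add0r ?subrr //; lia.
    * rewrite (@coefQQ R n m E) //.
      have -> : (p < n)%N by lia.
      have -> : (q + n - p.+1 = q.+1 + n - p.+2)%N by lia.
      rewrite Nik_split natrD; lra.
- idtac.
  case: p hp => [|p] hp //=.
  case: q => [|q]; rewrite ?subr0 //.
  rewrite (@coefQQ R n m E) //.
  have -> : (p < n)%N = false by lia.
  by rewrite !subr0.
- subst p; case: n n0 {sE kE} E mE cE => // n _ E mE cE /=.
  case: q => [|q]; first by rewrite !subr0.
  by rewrite (@coefQQ R n.+1 m E) // ?ltnSn addnK Nik_n mE sub0r subr0.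
Qed.
Local Open Scope ring_scope.

Lemma diff_id (R : realFieldType) n m (G H : edgeset n) : Cnm m G -> Cnm m H ->
  whitney R G - whitney R H = (1 - varx R * vary R) * (QQ R m G - QQ R m H).
Proof.
move=> cG cH.
suff : ((1 - varx R * vary R) * QQ R m G - whitney R G) -
       ((1 - varx R * vary R) * QQ R m H - whitney R H) = 0.
  move/eqP; rewrite subr_eq0 => /eqP e.
  rewrite mulrBr; apply/eqP; rewrite -subr_eq0; apply/eqP.
  move: e; set a := _ * QQ R m G; set b := _ * QQ R m H => e.
  have -> : whitney R G - whitney R H - (a - b) = (b - whitney R H) - (a - whitney R G) by ring.
  by rewrite e subrr.
apply/polyP => p; apply/polyP => q.
by rewrite coef0 coefB coef0 coefB (key _ _ _ cG) (key _ _ _ cH) subrr.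
Qed.

Lemma oneXY_neq0 (R : realFieldType) : (1 - varx R * vary R) != 0.
Proof.
apply/eqP => h; have := congr1 (fun P : {poly {poly R}} => (P`_0)`_0) h.
rewrite -[1 - _]mulr1 coef_1mXY /= !coef0 coef1 /= coef1 subr0 /=.
by move/eqP; rewrite oner_eq0.
Qed.

Theorem mainTheorem5 (R : realFieldType) (n m : nat) (G : edgeset n) :
  Cnm m G -> (whitney_maximum R m G <-> strong m G).
Proof.
move=> cG; split.
- case=> _ W; split => // H cH i k him /andP [k1 kn].
  have [Q [nQ eQ]] := W H cH.
  have eQ' : Q = QQ R m G - QQ R m H.
    apply: (mulfI (oneXY_neq0 R)); by rewrite -eQ (diff_id R cG cH).
  have [lt|ge] := ltnP (i + k) n.
    by rewrite (@Nik_low n H) //; case/and3P: cH.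
  have := nQ k.-1 (i + k - n)%N.
  rewrite eQ' coefB coefB (@coefQQ R n m G) // (@coefQQ R n m H) //.
  have -> : (k.-1 < n)%N by lia.
  have -> : (i + k - n + n - k.-1.+1 = i)%N by lia.
  have -> : (k.-1.+1 = k)%N by lia.
  by rewrite subr_ge0 ler_nat.
- case=> _ S; split => // H cH; exists (QQ R m G - QQ R m H); split; last first.
    exact: diff_id cG cH.
  move=> p q; rewrite coefB coefB (@coefQQ R n m G) // (@coefQQ R n m H) //.
  case: ifP => hp; last by rewrite subr0.
  rewrite subr_ge0 ler_nat.
  have [big|small] := ltnP m (q + n - p.+1)%N.
    by rewrite (@Nik_big n H) //; case/and3P: cH => _ /eqP ->.
  apply: S => //; lia.
Qed.
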